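(* Let $\lambda$ be a partition and $\sigma$ a sorted tableau of $\mathrm{dg}(\lambda)$. Then $\mathrm{maj}(\tau)=\mathrm{maj}(\sigma)$ for every $\tau\in\mathcal{F}(\sigma)$.
   Context: Diagrams and fillings: for a partition $\lambda=(\lambda_1\ge\dots\ge\lambda_n>0)$, $\mathrm{dg}(\lambda)$ is the set of cells $(i,r)$, $1\le i\le n$, $1\le r\le\lambda_i$ (columns from the left, rows from the bottom). A filling is $\sigma:\mathrm{dg}(\lambda)\to\mathbb{Z}_{>0}$; a basement row $0$ with all entries $\infty$ is adjoined. $\mathrm{leg}(i,r)=\lambda_i-r$. Triples: for $u<v$, $r\ge1$, $(v,r),(u,r)\in\mathrm{dg}(\lambda)$, cells $(v,r),(u,r),(u,r-1)$; with $a=\sigma(v,r),b=\sigma(u,r),c=\sigma(u,r-1)$ counterclockwise (inversion) if $a<b\le c$ or $c<a<b$ or $b\le c<a$, clockwise otherwise. Descent: $(u,r)$, $r\ge2$, with $\sigma(u,r)>\sigma(u,r-1)$; $\mathrm{maj}(\sigma)=\sum_{\text{descents}}(\mathrm{leg}+1)$. Sorted tableau: for non-identical columns $A$ left of $B$ of equal height with entries $a_k,b_k$ bottom to top and $r$ least with $a_r\ne b_r$: $A\lhd B$ if $r=1$ and $a_1<b_1$, or $r\ge2$ and the cells of $b_r,a_r,a_{r-1}$ do not form a counterclockwise triple; $\sigma$ is sorted if any two columns of equal height, $A$ left of $B$, are identical or satisfy $A\lhd B$. Operator $\mathcal{T}_i^{(r)}$ (defined when columns $i,i+1$ agree in rows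 $<r$ and differ in row $r$): swap entries of $(i,r),(i+1,r)$; then repeatedly, if cells $(i+1,r+1),(i,r+1)$ exist and the triple $(i+1,r+1),(i,r+1),(i,r)$ changed orientation (clockwise/counterclockwise) under the last swap, swap entries of $(i,r+1),(i+1,r+1)$ and increase $r$ by one; otherwise stop. PDS: let $\mathbf{w_0}=(s_1)(s_2s_1)\cdots(s_{n-1}\cdots s_2s_1)=s_{j_N}\cdots s_{j_1}$ ($N=\binom n2$). For $v\in S_n$ set $v_{(0)}=v$ and for $k=1,\dots,N$: $v_{(k)}=v_{(k-1)}s_{j_k}$ if $\ell(v_{(k-1)}s_{j_k})<\ell(v_{(k-1)})$, else $v_{(k)}=v_{(k-1)}$. The PDS of $v$ is the product, in the same left-to-right order, of those $s_{j_k}$ at which the multiplication was performed; writing it $s_{i_p}\cdots s_{i_1}$, set $\mathcal{T}_v^{(r)}=\mathcal{T}_{i_p}^{(r)}\circ\cdots\circ\mathcal{T}_{i_1}^{(r)}$. Blocks: in a filling of a rectangle, a block in row $r$ is a maximal set of consecutive columns $i,\dots,j$ that agree in every row $s<r$. For row $r$ of $\sigma$ with entries $b=(b_1,\dots,b_n)$ and blocks $B^{(1)},\dots,B^{(\ell)}$, let $W_r(\sigma)$ be the set of distinct words obtained by permuting entries of $b$ only within blocks; for $w\in W_r(\sigma)$ let $\tilde w\in S_n$ be the shortest permutation with $(b_{\tilde w^{-1}(1)},\dots,b_{\tilde w^{-1}(n)})=w$. Family: if $\sigma$ is a sorted tableau of an $m\times n$ rectangle, set $\mathcal F^{(m)}=\{\sigma\}$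 and for $r=m,m-1,\dots,1$ set $\mathcal F^{(r-1)}=\{\mathcal{T}^{(r)}_{\tilde w}(\tau):\tau\in\mathcal F^{(r)},\,w\in W_r(\sigma)\}$; $\mathcal F(\sigma)=\mathcal F^{(0)}$. For general $\lambda$, $\sigma$ is the left-to-right concatenation of sorted tableaux $\sigma_1,\dots,\sigma_k$ of the maximal rectangles of equal-height columns, and $\mathcal F(\sigma)$ is the set of concatenations $\tau_1\cdots\tau_k$ with $\tau_j\in\mathcal F(\sigma_j)$. *)

(* Defs.v *)
From mathcomp Require Import all_boot all_order all_fingroup.
Set Implicit Arguments. Unset Strict Implicit. Unset Printing Implicit Defensive.

(* A filling of dg(lambda) is the list of its columns, left to right; each
   column lists its entries bottom to top.  Columns are numbered 1..n and rows
   1..lambda_i as in the paper; row 0 is the basement (entries = infinity). *)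
Definition filling := seq (seq nat).

Definition col (s : filling) (i : nat) : seq nat := nth [::] s i.-1.
Definition height (s : filling) (i : nat) : nat := size (col s i).

(* extended values: None = infinity *)
Definition xnat := option nat.
Definition ltx (x y : xnat) : bool :=
  match x, y with
  | Some a, Some b => a < b
  | Some _, None => true
  | None, _ => false
  end.
Definition lex (x y : xnat) : bool := ~~ ltx y x.

Definition ent (s : filling) (i r : nat) : xnat :=
  if r == 0 then None else Some (nth 0 (col s i) r.-1).

Definition ccw (a b c : xnat) : bool :=
  [|| ltx a b && lex b c, ltx c a && ltx a b | lex b c && ltx c a].

Definition ccw_triple (s : filling) (u v r : nat) : bool :=
  ccw (ent s v r) (ent s u r) (ent s u r.-1).

Definition is_filling (s : filling) : Prop :=
  sorted geq (map size s) /\ all (fun c => 0 < size c) s /\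
  all (fun c => all (fun x => 0 < x) c) s.

(* maj: sum over descents (u,r), r >= 2, of leg(u,r)+1 = lambda_u - r + 1 *)
Definition maj (s : filling) : nat :=
  \sum_(c <- s) \sum_(2 <= r < (size c).+1)
     (if nth 0 c r.-2 < nth 0 c r.-1 then (size c - r).+1 else 0).

(* A <| B for columns A (left) and B (right) of equal height, A <> B *)
Definition col_lhd (A B : seq nat) : bool :=
  let k := find (fun k => nth 0 A k != nth 0 B k) (iota 0 (size A)) in
  if k == 0 then nth 0 A 0 < nth 0 B 0
  else ~~ ccw (Some (nth 0 B k)) (Some (nth 0 A k)) (Some (nth 0 A k.-1)).

Definition sorted_tableau (s : filling) : Prop :=
  is_filling s /\
  forall u v, 1 <= u -> u < v -> v <= size s -> height s u = height s v ->
    col s u = col s v \/ col_lhd (col s u) (col s v).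

Definition set_ent (s : filling) (i r x : nat) : filling :=
  set_nth [::] s i.-1 (set_nth 0 (col s i) r.-1 x).
Definition swap_cells (s : filling) (i r : nat) : filling :=
  let a := nth 0 (col s i) r.-1 in
  let b := nth 0 (col s i.+1) r.-1 in
  set_ent (set_ent s i r b) i.+1 r a.

(* old = state before the last swap (made in row r), new = after it *)
Fixpoint T_prop (fuel i r : nat) (old new : filling) : filling :=
  match fuel with
  | 0 => new
  | f.+1 =>
    if [&& r.+1 <= height new i, r.+1 <= height new i.+1 &
           ccw_triple old i i.+1 r.+1 != ccw_triple new i i.+1 r.+1]
    then T_prop f i r.+1 new (swap_cells new i r.+1)
    else new
  end.

Definition T_op (i r : nat) (s : filling) : filling :=
  T_prop (height s i) i r s (swap_cells s i r).

(* composition as functions: (pcomp v w) x = v (w x) *)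
Definition pcomp n (v w : 'S_n) : 'S_n := (w * v)%g.

Definition plen n (v : 'S_n) : nat :=
  #|[set p : 'I_n * 'I_n | (p.1 < p.2) && (v p.2 < v p.1)]|.

(* simple transposition s_j (1 <= j <= n-1) exchanging j and j+1; in 'I_n the
   point k stands for k+1, so s_j exchanges the ordinals j-1 and j *)
Definition sj n (j : nat) : 'S_n :=
  match @insub _ (fun k => k < n) _ j.-1, @insub _ (fun k => k < n) _ j with
  | Some a, Some b => tperm a b
  | _, _ => 1%g
  end.

(* w0 = (s_1)(s_2 s_1)...(s_{n-1}...s_1), read left to right *)
Definition w0_word (n : nat) : seq nat :=
  flatten [seq rev (iota 1 k) | k <- iota 1 n.-1].
(* the indices j_1, ..., j_N with w0 = s_{j_N} ... s_{j_1} *)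
Definition w0_js (n : nat) : seq nat := rev (w0_word n).

(* the indices i_1, i_2, ..., i_p (in this order) of the PDS s_{i_p}...s_{i_1} *)
Fixpoint pds_aux n (v : 'S_n) (js : seq nat) : seq nat :=
  match js with
  | [::] => [::]
  | j :: js' =>
    let v' := pcomp v (sj n j) in
    if plen v' < plen v then j :: pds_aux v' js' else pds_aux v js'
  end.
Definition pds n (v : 'S_n) : seq nat := pds_aux v (w0_js n).

Definition T_perm n (v : 'S_n) (r : nat) (s : filling) : filling :=
  foldl (fun t i => T_op i r t) s (pds v).

(* row r of s as a word indexed by 'I_n (ordinal k = column k+1) *)
Definition row_word (s : filling) (r : nat) n (k : 'I_n) : nat :=
  nth 0 (col s k.+1) r.-1.

Definition agree_below (s : filling) (r a b : nat) : bool :=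
  take r.-1 (col s a) == take r.-1 (col s b).

Definition same_block (s : filling) (r a b : nat) : bool :=
  all (fun m => agree_below s r a m) (iota (minn a b) (maxn a b - minn a b).+1).

Definition permw n (b : 'I_n -> nat) (p : 'S_n) : seq nat :=
  [seq b ((p^-1)%g k) | k <- enum 'I_n].

Definition inW (s : filling) (r : nat) (w : seq nat) : Prop :=
  exists p : 'S_(size s),
    (forall k : 'I_(size s), same_block s r k.+1 (p k).+1) /\
    w = permw (@row_word s r (size s)) p.

Definition shortest_for (s : filling) (r : nat) (w : seq nat)
  (p : 'S_(size s)) : Prop :=
  permw (@row_word s r (size s)) p = w /\
  forall q : 'S_(size s), permw (@row_word s r (size s)) q = w -> plen p <= plen q.
Arguments shortest_for : clear implicits.

(* for a sorted tableau s of an m x n rectangle (m = height s 1):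
   famR s k = F^(m-k) *)
Fixpoint famR (s : filling) (k : nat) : filling -> Prop :=
  match k with
  | 0 => fun t => t = s
  | k'.+1 => fun t' =>
      let r := height s 1 - k' in
      exists t w (p : 'S_(size s)),
        famR s k' t /\ inW s r w /\ shortest_for s r w p /\ t' = T_perm p r t
  end.

Definition fam_rect (s : filling) : filling -> Prop := famR s (height s 1).

(* decomposition into maximal rectangles of equal-height columns *)
Definition rects (s : filling) : seq filling :=
  foldr (fun c acc =>
           match acc with
           | (d :: g) :: gs => if size d == size c then (c :: d :: g) :: gs
                               else [:: c] :: acc
           | _ => [:: c] :: acc
           end) [::] s.

Definition tab_family (s : filling) (t : filling) : Prop :=
  exists ts : seq filling,
    size ts = size (rects s) /\
    (forall j, j < size ts -> fam_rect (nth [::] (rects s) j) (nth [::] ts j)) /\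
    t = flatten ts.

(* Main.v *)
Require Import Defs.
From mathcomp Require Import all_boot all_order all_fingroup.
From mathcomp Require Import zify.
Set Implicit Arguments. Unset Strict Implicit. Unset Printing Implicit Defensive.

Definition mc (c : seq nat) : nat :=
  \sum_(2 <= r < (size c).+1) (if nth 0 c r.-2 < nth 0 c r.-1 then (size c - r).+1 else 0).

Lemma maj_cons c s : maj (c :: s) = mc c + maj s.
Proof. by rewrite /maj big_cons. Qed.
Lemma maj_cat s1 s2 : maj (s1 ++ s2) = maj s1 + maj s2.
Proof. by rewrite /maj big_cat. Qed.

Lemma ccw_lem a b x y : ccw (Some b) (Some a) (Some x) = ccw (Some b) (Some a) (Some y) ->
  (x < a) + (y < b) = (y < a) + (x < b).
Proof.
rewrite /ccw /lex /ltx.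
case: (leqP a x); case: (leqP b x); case: (leqP a y); case: (leqP b y); case: (leqP a b) => //= *; lia.
Qed.

Definition entc (c : seq nat) r : xnat := if r == 0 then None else Some (nth 0 c r.-1).
Definition ccw2 (A B : seq nat) r := ccw (entc B r) (entc A r) (entc A r.-1).
Definition sw2 (A B : seq nat) r :=
  (set_nth 0 A r.-1 (nth 0 B r.-1), set_nth 0 B r.-1 (nth 0 A r.-1)).

Fixpoint Tprop2 (f r : nat) (oA oB nA nB : seq nat) : seq nat * seq nat :=
  match f with
  | 0 => (nA, nB)
  | f'.+1 =>
    if [&& r.+1 <= size nA, r.+1 <= size nB & ccw2 oA oB r.+1 != ccw2 nA nB r.+1]
    then Tprop2 f' r.+1 nA nB (sw2 nA nB r.+1).1 (sw2 nA nB r.+1).2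
    else (nA, nB)
  end.

Lemma set_nth_catL (T : Type) (x0 : T) pre y s z :
  set_nth x0 (pre ++ y :: s) (size pre) z = pre ++ z :: s.
Proof. by elim: pre => //= a pre ->. Qed.

Section Cols.
Variables (pre suf : filling).
Lemma colA A B : col (pre ++ A :: B :: suf) (size pre).+1 = A.
Proof. by rewrite /col /= nth_cat ltnn subnn. Qed.
Lemma colB A B : col (pre ++ A :: B :: suf) (size pre).+2 = B.
Proof. by rewrite /col /= nth_cat ltnNge leqnSn /= subSnn. Qed.

Lemma swap_cellsE A B r :
  swap_cells (pre ++ A :: B :: suf) (size pre).+1 r =
  pre ++ (sw2 A B r).1 :: (sw2 A B r).2 :: suf.
Proof.
rewrite /swap_cells colA colB /set_ent colA /= set_nth_catL.
have -> : pre ++ set_nth 0 A r.-1 (nth 0 B r.-1) :: B :: suf =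
   rcons pre (set_nth 0 A r.-1 (nth 0 B r.-1)) ++ B :: suf by rewrite cat_rcons.
rewrite /col /= nth_cat size_rcons ltnn subnn /=.
by rewrite -(size_rcons pre (set_nth 0 A r.-1 (nth 0 B r.-1))) set_nth_catL cat_rcons.
Qed.

Lemma T_propE f r oA oB nA nB :
  T_prop f (size pre).+1 r (pre ++ oA :: oB :: suf) (pre ++ nA :: nB :: suf) =
  pre ++ (Tprop2 f r oA oB nA nB).1 :: (Tprop2 f r oA oB nA nB).2 :: suf.
Proof.
elim: f r oA oB nA nB => [//|f IH] r oA oB nA nB /=.
rewrite /height colA colB /ccw_triple /ent colA colB colA colB.
rewrite /ccw2 /entc.
case: ifP => // _.
by rewrite swap_cellsE IH.
Qed.

Lemma T_opE A B r :
  T_op (size pre).+1 r (pre ++ A :: B :: suf) =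
  pre ++ (Tprop2 (size A) r A B (sw2 A B r).1 (sw2 A B r).2).1
      :: (Tprop2 (size A) r A B (sw2 A B r).1 (sw2 A B r).2).2 :: suf.
Proof. by rewrite /T_op swap_cellsE T_propE /height colA. Qed.
End Cols.

Section Two.
Variables (A B : seq nat) (m r : nat).
Hypotheses (sA : size A = m) (sB : size B = m) (r1 : 1 <= r) (rm : r <= m)
  (agr : forall j, j < r.-1 -> nth 0 A j = nth 0 B j).

Definition stA k := mkseq (fun j => if (r.-1 <= j) && (j < k) then nth 0 B j else nth 0 A j) m.
Definition stB k := mkseq (fun j => if (r.-1 <= j) && (j < k) then nth 0 A j else nth 0 B j) m.

Lemma st0A : stA r.-1 = A.
Proof.
apply: (@eq_from_nth _ 0); first by rewrite size_mkseq sA.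
move=> j; rewrite size_mkseq => jm; rewrite nth_mkseq //.
by have -> : (r.-1 <= j) && (j < r.-1) = false by lia.
Qed.
Lemma st0B : stB r.-1 = B.
Proof.
apply: (@eq_from_nth _ 0); first by rewrite size_mkseq sB.
move=> j; rewrite size_mkseq => jm; rewrite nth_mkseq //.
by have -> : (r.-1 <= j) && (j < r.-1) = false by lia.
Qed.

Lemma st_step k : r.-1 <= k -> k < m ->
  sw2 (stA k) (stB k) k.+1 = (stA k.+1, stB k.+1).
Proof.
move=> rk km; rewrite /sw2 /stA /stB /=; congr pair.
  apply: (@eq_from_nth _ 0).
    by rewrite size_set_nth !size_mkseq; lia.
  move=> j; rewrite size_set_nth !size_mkseq => jm.
  have jm' : j < m by lia.
  rewrite nth_set_nth /= !nth_mkseq //.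
  case: eqP => [->|jk]; first by rewrite ltnn andbF leqnn rk.
  by have -> : (j < k.+1) = (j < k) by lia.
apply: (@eq_from_nth _ 0).
  by rewrite size_set_nth !size_mkseq; lia.
move=> j; rewrite size_set_nth !size_mkseq => jm.
have jm' : j < m by lia.
rewrite nth_set_nth /= !nth_mkseq //.
case: eqP => [->|jk]; first by rewrite ltnn andbF leqnn rk.
by have -> : (j < k.+1) = (j < k) by lia.
Qed.

Lemma sizeA k : size (stA k) = m. Proof. by rewrite size_mkseq. Qed.
Lemma sizeB k : size (stB k) = m. Proof. by rewrite size_mkseq. Qed.

Lemma mc_sum (C D : seq nat) : size C = m -> size D = m ->
  mc C + mc D = \sum_(2 <= j < m.+1)
    (((nth 0 C j.-2 < nth 0 C j.-1) + (nth 0 D j.-2 < nth 0 D j.-1)) * (m - j).+1).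
Proof.
move=> sC sD; rewrite /mc sC sD -big_split /=; apply: eq_bigr => j _.
by case: ifP => _; case: ifP => _ /=; lia.
Qed.

Lemma final k : r <= k -> k <= m ->
  (k < m -> ccw2 (stA k.-1) (stB k.-1) k.+1 = ccw2 (stA k) (stB k) k.+1) ->
  mc (stA k) + mc (stB k) = mc A + mc B.
Proof.
move=> rk km hc.
rewrite (mc_sum (sizeA k) (sizeB k)) (mc_sum sA sB).
rewrite big_nat_cond [RHS]big_nat_cond; apply: eq_bigr => j /andP[/andP[j2 jm] _].
congr (_ * _).
have jm1 : j.-1 < m by lia.
have jm2 : j.-2 < m by lia.
rewrite !nth_mkseq //.
have ej : j.-1 = j.-2.+1 by lia.
have [h|[h|[h|[h|h]]]] : j.-1 < r.-1 \/ j.-1 = r.-1 \/ (r.-1 < j.-1 /\ j.-1 < k)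
   \/ j.-1 = k \/ k < j.-1 by lia.
- have -> : (r.-1 <= j.-1) && (j.-1 < k) = false by lia.
  by have -> : (r.-1 <= j.-2) && (j.-2 < k) = false by lia.
- have -> : (r.-1 <= j.-1) && (j.-1 < k) by lia.
  have -> : (r.-1 <= j.-2) && (j.-2 < k) = false by lia.
  rewrite /= agr; last by lia.
  rewrite -(agr (j:=j.-2)); last by lia.
  by rewrite addnC.
- have -> : (r.-1 <= j.-1) && (j.-1 < k) by lia.
  have -> : (r.-1 <= j.-2) && (j.-2 < k) by lia.
  by rewrite addnC.
- have kk : k < m by lia.
  move: (hc kk); rewrite /ccw2 /entc /=.
  have -> : (k == 0) = false by lia.
  rewrite !nth_mkseq //; try lia.
  have -> : (r.-1 <= k) && (k < k.-1) = false by lia.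
  have -> : (r.-1 <= k.-1) && (k.-1 < k.-1) = false by lia.
  have -> : (r.-1 <= k) && (k < k) = false by lia.
  have -> : (r.-1 <= k.-1) && (k.-1 < k) by lia.
  have -> : (r.-1 <= j.-1) && (j.-1 < k) = false by lia.
  have -> : (r.-1 <= j.-2) && (j.-2 < k) by lia.
  have -> : j.-1 = k by lia.
  move/ccw_lem; lia.
- have -> : (r.-1 <= j.-1) && (j.-1 < k) = false by lia.
  by have -> : (r.-1 <= j.-2) && (j.-2 < k) = false by lia.
Qed.

Lemma loop f k : r <= k -> k <= m -> m <= f + k ->
  mc (Tprop2 f k (stA k.-1) (stB k.-1) (stA k) (stB k)).1 +
  mc (Tprop2 f k (stA k.-1) (stB k.-1) (stA k) (stB k)).2 = mc A + mc B.
Proof.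
elim: f k => [|f IH] k rk km fk /=.
  by apply: final => // ?; lia.
rewrite !sizeA !sizeB.
case: ifP => [/andP[km1 /andP[_ hc]]|hc].
  have e := st_step (k:=k) ltac:(lia) km1; rewrite /sw2 /= in e.
  case: e => -> ->.
  by apply: IH; lia.
apply: final => // km1.
apply/eqP; move: hc; rewrite km1 /=; by case: eqP.
Qed.

Lemma sw_init : sw2 A B r = (stA r, stB r).
Proof. have := st_step (k:=r.-1) (leqnn _) ltac:(lia). by rewrite prednK // st0A st0B. Qed.

Lemma Tprop2_main :
  mc (Tprop2 (size A) r A B (sw2 A B r).1 (sw2 A B r).2).1 +
  mc (Tprop2 (size A) r A B (sw2 A B r).1 (sw2 A B r).2).2 = mc A + mc B.
Proof.
rewrite sw_init /= sA.
have := @loop m r (leqnn _) rm ltac:(lia).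
by rewrite st0A st0B.
Qed.

Lemma take_st k : take r.-1 (stA k) = take r.-1 A /\ take r.-1 (stB k) = take r.-1 B.
Proof.
rewrite /stA /stB; split; apply: (@eq_from_nth _ 0);
  rewrite ?size_take ?size_mkseq ?sA ?sB // => j jr;
  have [jr1 jm] : j < r.-1 /\ j < m by move: jr; case: ifP; lia.
- rewrite !nth_take // nth_mkseq //.
  by have -> : (r.-1 <= j) && (j < k) = false by lia.
- rewrite !nth_take // nth_mkseq //.
  by have -> : (r.-1 <= j) && (j < k) = false by lia.
Qed.
Lemma loop_out f k : r <= k ->
  exists k', Tprop2 f k (stA k.-1) (stB k.-1) (stA k) (stB k) = (stA k', stB k').
Proof.
elim: f k => [|f IH] k rk /=; first by exists k.
rewrite !sizeA !sizeB.
case: ifP => [/andP[km1 /andP[_ hc]]|hc]; last by exists k.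
have e := st_step (k:=k) ltac:(lia) km1; rewrite /sw2 /= in e.
case: e => -> ->.
by apply: IH; lia.
Qed.

Lemma Tprop2_out : exists k,
  Tprop2 (size A) r A B (sw2 A B r).1 (sw2 A B r).2 = (stA k, stB k).
Proof.
rewrite sw_init /=.
have [k' e] := @loop_out (size A) r (leqnn _).
by exists k'; rewrite -e st0A st0B.
Qed.
End Two.

Lemma decomp (t : filling) i : 0 < i -> i < size t ->
  t = take i.-1 t ++ nth [::] t i.-1 :: nth [::] t i :: drop i.+1 t.
Proof.
move=> i0 it.
rewrite -{1}(cat_take_drop i.-1 t); congr (_ ++ _).
rewrite (drop_nth [::]); last by lia.
rewrite prednK // (drop_nth [::]) //.
Qed.

Lemma T_op_rect (t : filling) (i r m : nat) : 0 < i -> i < size t -> all (fun c => size c == m) t ->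
  0 < r -> r <= m -> take r.-1 (col t i) = take r.-1 (col t i.+1) ->
  [/\ maj (T_op i r t) = maj t, size (T_op i r t) = size t,
      all (fun c => size c == m) (T_op i r t) &
      map (take r.-1) (T_op i r t) = map (take r.-1) t].
Proof.
move=> i0 it hall r0 rm htk.
set pre := take i.-1 t; set A := nth [::] t i.-1; set B := nth [::] t i; set suf := drop i.+1 t.
have et := decomp i0 it; rewrite -/pre -/A -/B -/suf in et.
have sp : (size pre).+1 = i by rewrite size_takel; lia.
have sA : size A = m by apply/eqP; apply: (allP hall); rewrite /A /B; apply: mem_nth; first exact: leq_ltn_trans (leq_pred i) it; exact: it.
have sB : size B = m by apply/eqP; apply: (allP hall); rewrite /B; apply: mem_nth.
have agr : forall j, j < r.-1 -> nth 0 A j = nth 0 B j.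
  move=> j jr; move: htk; rewrite /col /= -/A -/B => htk.
  by rewrite -(nth_take 0 jr) htk nth_take.
clear htk; move: hall; rewrite et -sp T_opE => hall.
have hm := Tprop2_main sA sB r0 rm agr.
have [k ek] := Tprop2_out sA sB r0 rm.
rewrite ek /= in hm *.
have [tA tB] := take_st sA sB r0 rm k.
split.
- rewrite !maj_cat !maj_cons; lia.
- by rewrite !size_cat.
- move: hall; rewrite !all_cat /= => /andP[-> /and3P[_ _ ->]].
  by rewrite !size_mkseq eqxx.
- by rewrite !map_cat /= tA tB.
Qed.

Section Perm.
Variable n : nat.
Implicit Types (p v : 'S_n) (x y i j : 'I_n).

Definition inv_set v := [set pr : 'I_n * 'I_n | (pr.1 < pr.2) && (v pr.2 < v pr.1)].
Lemma plenE v : plen v = #|inv_set v|. Proof. by []. Qed.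

Lemma ord_neq i j : i <> j -> (i : nat) <> j.
Proof. by move=> h e; apply: h; apply: val_inj. Qed.

Lemma swap_lt p x y : x < y -> p y < p x -> plen (tperm x y * p) < plen p.
Proof.
move=> xy pyx.
pose mid (u : 'I_n) := (x < u) && (u < y).
pose f (pr : 'I_n * 'I_n) :=
  if mid pr.1 || mid pr.2 then pr else (tperm x y pr.1, tperm x y pr.2).
have midt u : mid (tperm x y u) = mid u.
  rewrite /mid; case: tpermP => [->|->|//]; lia.
have finv : involutive f.
  move=> [a b]; rewrite /f /=; case: (boolP (mid a || mid b)) => h /=; first by rewrite h.
  by rewrite !midt (negbTE h) !tpermK.
have finj := inv_inj finv.
rewrite !plenE -(card_imset _ finj).
have xyin : (x, y) \in inv_set p by rewrite inE /= xy pyx.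
rewrite (cardsD1 (x, y) (inv_set p)) xyin add1n ltnS.
apply: subset_leq_card; apply/subsetP => pr /imsetP[[i j] hin ->].
move: hin; rewrite !inE /= !permM => /andP[ij hp].
rewrite /f /mid /=.
move: hp; case: (tpermP x y i) => [ei|ei|/ord_neq hix /ord_neq hiy];
  case: (tpermP x y j) => [ej|ej|/ord_neq hjx /ord_neq hjy]; rewrite ?ei ?ej => hp;
  try subst i; try subst j;
  (case: ifP => hm; rewrite /= ?xpair_eqE).
all: (apply/and3P; split; [apply/negP => /andP[/eqP e1 /eqP e2]; subst; try lia | try lia | try lia]).

Qed.
End Perm.

Section Perm2.
Variable n : nat.
Variable Adj : nat -> bool.
Implicit Types (p v : 'S_n) (x y : 'I_n).

Lemma sj_lt v (j : nat) : plen (Defs.pcomp v (sj n j)) < plen v ->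
  exists a b : 'I_n, [/\ (a : nat) = j.-1, (b : nat) = j, 0 < j, sj n j = tperm a b & v b < v a].
Proof.
rewrite /Defs.pcomp /sj.
case: insubP => [a _ ea|_]; last by rewrite mul1g ltnn.
case: insubP => [b _ eb|_]; last by rewrite mul1g ltnn.
move=> hlt.
have j0 : 0 < j.
  case: j ea eb hlt => // ea eb.
  have -> : a = b by apply: val_inj; rewrite ea eb.
  by rewrite tperm1 mul1g ltnn.
exists a, b; split => //.
case: (ltngtP (v b) (v a)) => // h.
- have ab : a < b by rewrite ea eb; lia.
  have := @swap_lt n (tperm a b * v) a b ab.
  rewrite !permM tpermL tpermR => /(_ h).
  rewrite mulgA tperm2 mul1g => h2.
  by move: (ltn_trans h2 hlt); rewrite ltnn.
- have /perm_inj ab : v b = v a by apply: val_inj.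
  by move: ea eb; rewrite ab => ->; lia.
Qed.

Definition Inv v := forall x y, x < y -> v y < v x -> forall z, x <= z -> z < y -> Adj z.

Lemma Inv_step v (a b : 'I_n) : (b : nat) = a.+1 -> v b < v a -> Inv v -> Inv (tperm a b * v).
Proof.
move=> eb hba hv x y xy; rewrite !permM => hyx z xz zy.
have [->|za] := eqVneq z a.
  by apply: (hv a b) => //; lia.
move: hyx; case: (tpermP a b x) => [ex|ex|/ord_neq hxa /ord_neq hxb];
  case: (tpermP a b y) => [ey|ey|/ord_neq hya /ord_neq hyb]; try subst x; try subst y; move=> hyx.
all: first [ apply: (hv _ _ _ hyx); lia | lia ].
Qed.

Lemma pds_ok js v : Inv v -> forall j : nat, j \in pds_aux v js -> 0 < j < n /\ Adj j.-1.
Proof.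
elim: js v => [//|j0 js IH] v hv j /=.
case: ifP => [hlt|_]; last by apply: IH.
have [a [b [ea eb j0p ej hba]]] := sj_lt hlt.
have hv' : Inv (Defs.pcomp v (sj n j0)).
  rewrite /Defs.pcomp ej; apply: Inv_step => //; lia.
rewrite in_cons => /orP[/eqP ->|]; last by apply: IH.
split; first by rewrite j0p -eb ltn_ord.
apply: (hv a b); try lia.
Qed.
End Perm2.

Lemma sum_pos n (F : 'I_n -> bool) : 0 < \sum_(k : 'I_n) (F k : nat) -> exists k, F k.
Proof.
move=> h; case: (boolP [exists k, F k]) => [/existsP//|/existsPn hn].
by move: h; rewrite big1 // => k _; rewrite (negbTE (hn k)).
Qed.

Section Short.
Variables (s : filling) (r : nat).
Local Notation n := (size s).
Local Notation b := (@row_word s r (size s)).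
Definition AdjS z := agree_below s r z.+1 z.+2.

Lemma block_pres (q : 'S_n) z : (forall k : 'I_n, same_block s r k.+1 (q k).+1) -> ~~ AdjS z ->
  forall k : 'I_n, (k <= z) = (q k <= z).
Proof.
move=> hq hz k; apply/idP/idP => h; apply/negPn/negP; rewrite -ltnNge => h2;
  move: (hq k); rewrite /same_block => /allP ha; move/negP: hz; apply; rewrite /AdjS.
- have h1 := ha z.+1; have h3 := ha z.+2.
  rewrite !mem_iota in h1 h3.
  move: h1 h3 => /(_ ltac:(lia)) /eqP e1 /(_ ltac:(lia)) /eqP e2.
  by rewrite /agree_below -e1 -e2.
- have h1 := ha z.+1; have h3 := ha z.+2.
  rewrite !mem_iota in h1 h3.
  move: h1 h3 => /(_ ltac:(lia)) /eqP e1 /(_ ltac:(lia)) /eqP e2.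
  by rewrite /agree_below -e1 -e2.
Qed.

Lemma permw_pt (p q : 'S_n) : permw b p = permw b q -> forall k, b ((p^-1)%g k) = b ((q^-1)%g k).
Proof.
rewrite /permw => /eq_in_map e k; apply: e; by rewrite mem_enum.
Qed.

Lemma cnt_perm (p : 'S_n) z c :
  \sum_(k : 'I_n) (((p k <= z) && (b k == c)) : nat) = \sum_(k : 'I_n) (((k <= z) && (b ((p^-1)%g k) == c)) : nat).
Proof.
rewrite (reindex_inj (@perm_inj _ (p^-1)%g)) /=.
by apply: eq_bigr => k _; rewrite permKV.
Qed.

Lemma shortest_Inv w (p : 'S_n) : inW s r w -> shortest_for s r w p -> Inv AdjS p.
Proof.
move=> [q [hq hwq]] [hwp hmin].
have hpt : forall k, b ((p^-1)%g k) = b ((q^-1)%g k) by apply: permw_pt; rewrite hwp hwq.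
have nosame : forall x y : 'I_n, x < y -> p y < p x -> b x = b y -> False.
  move=> x y xy pyx bxy.
  have := swap_lt xy pyx.
  have : permw b (tperm x y * p) = w.
    rewrite -hwp /permw; apply: eq_map => k.
    rewrite invMg permM tpermV.
    by case: tpermP => // ->.
  by move=> /hmin; rewrite leqNgt => /negP.
move=> x y xy pyx z xz zy; apply/negPn/negP => hz.
have hbl := block_pres hq hz.
have cnt : forall c, \sum_(k : 'I_n) (((k <= z) && (b k == c)) : nat) = \sum_(k : 'I_n) (((p k <= z) && (b k == c)) : nat).
  move=> c; rewrite cnt_perm.
  under [RHS]eq_bigr => k _ do rewrite hpt.
  rewrite -cnt_perm; apply: eq_bigr => k _; by rewrite hbl.
have dd : forall c, \sum_(k : 'I_n) (((k <= z) && (z < p k) && (b k == c)) : nat) =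
                    \sum_(k : 'I_n) (((z < k) && (p k <= z) && (b k == c)) : nat).
  move=> c; have := cnt c.
  have e1 : \sum_(k : 'I_n) (((k <= z) && (b k == c)) : nat) =
     \sum_(k : 'I_n) (((k <= z) && (p k <= z) && (b k == c)) : nat) +
     \sum_(k : 'I_n) (((k <= z) && (z < p k) && (b k == c)) : nat).
    rewrite -big_split /=; apply: eq_bigr => k _.
    by case: (leqP (p k) z); case: (leqP k z); case: (b k == c).
  have e2 : \sum_(k : 'I_n) (((p k <= z) && (b k == c)) : nat) =
     \sum_(k : 'I_n) (((k <= z) && (p k <= z) && (b k == c)) : nat) +
     \sum_(k : 'I_n) (((z < k) && (p k <= z) && (b k == c)) : nat).
    rewrite -big_split /=; apply: eq_bigr => k _.
    by case: (leqP (p k) z); case: (leqP k z); case: (b k == c).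
  rewrite e1 e2; lia.
have [u [hu|hu]] : exists u : 'I_n, (u <= z) && (z < p u) \/ (z < u) && (p u <= z).
  case: (leqP (p x) z) => h.
  - by exists y; right; apply/andP; split; lia.
  - by exists x; left; apply/andP; split; lia.
- have : 0 < \sum_(k : 'I_n) (((k <= z) && (z < p k) && (b k == b u)) : nat).
    rewrite (bigD1 u) //= hu eqxx; lia.
  rewrite dd => /sum_pos [y' /andP[/andP[h1 h2] /eqP h3]].
  move/andP: hu => [h4 h5].
  apply: (nosame u y'); try lia; by rewrite h3.
- have : 0 < \sum_(k : 'I_n) (((z < k) && (p k <= z) && (b k == b u)) : nat).
    rewrite (bigD1 u) //= hu eqxx; lia.
  rewrite -dd => /sum_pos [x' /andP[/andP[h1 h2] /eqP h3]].
  move/andP: hu => [h4 h5].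
  apply: (nosame x' u); try lia; by rewrite h3.
Qed.
End Short.

Lemma take_col a (t s : filling) k : map (take a) t = map (take a) s ->
  take a (col t k) = take a (col s k).
Proof.
move=> e; rewrite /col.
have h : forall u : filling, take a (nth [::] u k.-1) = nth [::] (map (take a) u) k.-1.
  move=> u; case: (ltnP k.-1 (size u)) => h; first by rewrite (nth_map [::]).
  by rewrite !nth_default ?size_map.
by rewrite !h e.
Qed.

Lemma map_take_le (t s : filling) i j : map (take j) t = map (take j) s -> i <= j ->
  map (take i) t = map (take i) s.
Proof.
move=> e ij; have := congr1 (map (take i)) e; rewrite -!map_comp.
by rewrite !(eq_map (fun x => take_takel x ij)).
Qed.

Section Rect.
Variables (s : filling) (m : nat).
Hypothesis hs : all (fun c => size c == m) s.

Lemma T_perm_ok r (p : 'S_(size s)) t : 0 < r -> r <= m -> Inv (AdjS s r) p ->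
  size t = size s -> all (fun c => size c == m) t -> map (take r.-1) t = map (take r.-1) s ->
  [/\ maj (T_perm p r t) = maj t, size (T_perm p r t) = size s,
      all (fun c => size c == m) (T_perm p r t) &
      map (take r.-1) (T_perm p r t) = map (take r.-1) s].
Proof.
move=> r0 rm hinv.
have hl := @pds_ok (size s) (AdjS s r) (w0_js (size s)) p hinv.
rewrite /T_perm; rewrite -/(pds p) in hl.
elim: (pds p) hl t => [|j l IH] hl t st ht et //=.
have [hj hadj] := hl j (mem_head _ _).
have [e1 e2 e3 e4] := @T_op_rect t j r m ltac:(lia) ltac:(lia) ht r0 rm
   ltac:(rewrite (take_col j et) (take_col j.+1 et); move: hadj; rewrite /AdjS /agree_below prednK; [move/eqP=> -> //|lia]).
have [f1 f2 f3 f4] := IH (fun j' h => hl j' ltac:(by rewrite in_cons h orbT)) (T_op j r t) ltac:(by rewrite e2 st) e3 (etrans e4 et).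
by rewrite f1 e1.
Qed.
End Rect.

Lemma famR_ok (s : filling) : all (fun c => size c == height s 1) s ->
  forall k t, k <= height s 1 -> famR s k t ->
  [/\ maj t = maj s, size t = size s, all (fun c => size c == height s 1) t &
      map (take (height s 1 - k)) t = map (take (height s 1 - k)) s].
Proof.
move=> hs; elim=> [|k IH] t hk /=.
  by move=> ->.
move=> [t0 [w [p [h0 [hw [hsh ->]]]]]].
have [a1 a2 a3 a4] := IH t0 ltac:(lia) h0.
have hinv := shortest_Inv hw hsh.
have := @T_perm_ok s (height s 1) hs (height s 1 - k) p t0 ltac:(lia) ltac:(lia) hinv a2 a3
  ltac:(apply: map_take_le a4 _; lia).
move=> [b1 b2 b3 b4]; split => //.
- by rewrite b1 a1.
- have -> : height s 1 - k.+1 = (height s 1 - k).-1 by lia.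
  exact: b4.
Qed.

Lemma fam_rect_maj (s t : filling) : all (fun c => size c == height s 1) s ->
  fam_rect s t -> maj t = maj s.
Proof. by move=> hs /(famR_ok hs (leqnn _)) []. Qed.

Definition rstep (c : seq nat) (acc : seq filling) : seq filling :=
  match acc with
  | (d :: g) :: gs => if size d == size c then (c :: d :: g) :: gs else [:: c] :: acc
  | _ => [:: c] :: acc
  end.

Lemma rects_cons c s : rects (c :: s) = rstep c (rects s).
Proof. by []. Qed.

Lemma rects_flatten s : flatten (rects s) = s.
Proof.
elim: s => // c s IH; rewrite rects_cons -[in RHS]IH /rstep.
case: (rects s) => [|[|d g] gs] //=.
by case: ifP.
Qed.

Lemma rects_rect s : all (fun R => all (fun c => size c == height R 1) R) (rects s).
Proof.
elim: s => // c s IH; rewrite rects_cons /rstep.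
move: IH; case: (rects s) => [|[|d g] gs] //=; first by rewrite /height /col /= eqxx.
  by rewrite /height /col /= eqxx.
case: ifP => [/eqP e|_] /=.
  move=> /andP[h1 ->]; rewrite andbT; move: h1.
  by rewrite /height /col /= e eqxx.
by move=> /andP[-> ->]; rewrite /height /col /= eqxx.
Qed.

Lemma sum_maj (ts Rs : seq filling) : size ts = size Rs ->
  (forall j, j < size ts -> maj (nth [::] ts j) = maj (nth [::] Rs j)) ->
  maj (flatten ts) = maj (flatten Rs).
Proof.
rewrite /maj !big_flatten /=.
elim: ts Rs => [|x ts IH] [|R Rs] //= [e] h.
rewrite !big_cons; congr (_ + _).
  exact: (h 0).
by apply: IH => // j hj; apply: (h j.+1).
Qed.

Theorem mainTheorem7 (sigma : filling) :
  sorted_tableau sigma ->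
  forall tau, tab_family sigma tau -> maj tau = maj sigma.
Proof.
move=> _ tau [ts [hsz [hf ->]]].
rewrite -{1}(rects_flatten sigma); apply: sum_maj => // j hj.
apply: fam_rect_maj; last exact: hf.
apply: (allP (rects_rect sigma)); apply: mem_nth; by rewrite -hsz.
Qed.
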